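(* Let $G$ be a finite connected graph with nodes $\{1,\dots,n_v\}$ and edges $\{1,\dots,n_e\}$. Let $B\in\mathbb{R}^{n_e\times n_v}$ be its edge-vertex incidence matrix and $L=B^\top B$. Let $\varrho\in\{1,\dots,n_v\}$ be a node. Let $B_{\mathtt{C}\widehat\varrho}$ be $B$ restricted to the rows in $\mathtt{C}$ and with column $\varrho$ removed, and let $L_{\widehat\varrho\widehat\varrho}$ be $L$ with row and column $\varrho$ removed. Let $\mathtt{C}\subseteq\{1,\dots,n_e\}$ be such that $$\Big(\prod_{i\neq\varrho}\mathrm{deg}(i)\Big)^{-1}\det\begin{bmatrix}0_{|\mathtt{C}|}&B_{\mathtt{C}\widehat\varrho}\\-(B_{\mathtt{C}\widehat\varrho})^\top&\mathrm{skew}(L_{\widehat\varrho\widehat\varrho})\end{bmatrix}\neq0.$$ Then $\mathtt{C}$ is the set of (simple) edges of a dimer-rooted forest of $G$ with root $\varrho$.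
   Context: In the incidence matrix, each edge $e=(i,j)$ with $i<j$ has row $B_{e,:}$ with entry $+1$ at $i$, $-1$ at $j$, and $0$ elsewhere. $\mathrm{deg}(i)$ is the number of neighbours of node $i$. For a square matrix $M$, $\mathrm{skew}(M)=\mathrm{triu}(M)-\mathrm{triu}(M)^\top$, where $\mathrm{triu}$ is the upper-triangular part with respect to the node ordering. Rows and columns are taken in increasing index order. $0_m$ is the $m\times m$ zero matrix. Definition: a dimer-rooted forest of $G$ with root $\varrho$ is a set of edges $\mathtt{C}$ such that (i) $\mathtt{C}$ contains no cycle and $|\mathtt{C}|$ has the same parity as $n_v-1$; and (ii) $\mathtt{C}$ can be completed to a spanning subgraph by adding an edge-disjoint set of dimers (edges of $G$, not part of $\mathtt{C}$) such that each connected component of $\mathtt{C}$ is either a tree rooted at $\varrho$ or a tree rooted at one dimer. *)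

(* Defs.v *)
From HB Require Import structures.
From mathcomp Require Import all_boot all_order all_algebra.
From mathcomp Require Import reals.
Set Implicit Arguments. Unset Strict Implicit. Unset Printing Implicit Defensive.
Import Order.TTheory GRing.Theory Num.Theory.
Local Open Scope ring_scope.

(* A graph with nodes 'I_nv and edges 'I_ne is given by the map
   [ends : 'I_ne -> 'I_nv * 'I_nv], edge e = (i, j) with i < j. *)
Section Graph.
Variables (nv ne : nat) (ends : 'I_ne -> 'I_nv * 'I_nv).

Definition simple_graph : Prop :=
  (forall e, ((ends e).1 < (ends e).2)%N) /\ injective ends.

Definition adjE (C : {set 'I_ne}) : rel 'I_nv :=
  fun i j => [exists e in C, (ends e == (i, j)) || (ends e == (j, i))].

Definition adj : rel 'I_nv := adjE setT.

Definition connected_graph : Prop := forall i j, connect adj i j.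

Definition deg (i : 'I_nv) : nat := #|[set j | adj i j]|.

Definition incidence (R : pzRingType) : 'M[R]_(ne, nv) :=
  \matrix_(e, i) (if i == (ends e).1 then 1 else if i == (ends e).2 then -1 else 0).

(* C contains no cycle: no edge of C lies on a cycle of C, i.e. its two
   endpoints are not connected in C minus that edge *)
Definition acyclic (C : {set 'I_ne}) : Prop :=
  forall e, e \in C -> ~~ connect (adjE (C :\ e)) (ends e).1 (ends e).2.

Definition covered (D : {set 'I_ne}) (v : 'I_nv) : bool :=
  [exists d in D, (v == (ends d).1) || (v == (ends d).2)].

(* dimer-rooted forest with root rho:
   (i) acyclic, |C| = nv - 1 mod 2;
   (ii) there is a set D of dimers (edges not in C, pairwise vertex-disjoint)
        such that the component of C containing rho is a tree rooted at rho
        (contains no dimer vertex) and every other component of C is a tree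
        rooted at exactly one dimer vertex. *)
Definition dimer_rooted_forest (rho : 'I_nv) (C : {set 'I_ne}) : Prop :=
  acyclic C /\ odd #|C| = odd (nv - 1) /\
  exists D : {set 'I_ne},
    [disjoint C & D] /\
    (forall d1 d2, d1 \in D -> d2 \in D -> d1 != d2 ->
       [disjoint [:: (ends d1).1; (ends d1).2] & [:: (ends d2).1; (ends d2).2]]) /\
    (forall v, connect (adjE C) rho v -> ~~ covered D v) /\
    (forall u, ~~ connect (adjE C) rho u ->
       #|[set v | connect (adjE C) u v & covered D v]| = 1%N).

End Graph.
Arguments incidence {nv ne} ends R.

Definition triu (R : pzRingType) (m : nat) (M : 'M[R]_m) : 'M[R]_m :=
  \matrix_(i, j) (if (i <= j)%N then M i j else 0).
Definition skew_part (R : pzRingType) (m : nat) (M : 'M[R]_m) : 'M[R]_m :=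
  triu M - (triu M)^T.

(* B restricted to the rows in C (increasing order) with column rho removed;
   nodes are 'I_n.+1, the remaining columns are lift rho : 'I_n -> 'I_n.+1
   (increasing order). *)
Definition B_C_hat (R : pzRingType) (n ne : nat) (ends : 'I_ne -> 'I_n.+1 * 'I_n.+1)
  (C : {set 'I_ne}) (rho : 'I_n.+1) : 'M[R]_(#|C|, n) :=
  \matrix_(a, j) incidence ends R (enum_val a) (lift rho j).

Definition L_hat (R : pzRingType) (n ne : nat) (ends : 'I_ne -> 'I_n.+1 * 'I_n.+1)
  (rho : 'I_n.+1) : 'M[R]_n :=
  let L := (incidence ends R)^T *m incidence ends R in
  \matrix_(i, j) L (lift rho i) (lift rho j).

Arguments B_C_hat R {n ne} ends C rho.
Arguments L_hat R {n ne} ends rho.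

(* Main.v *)
Require Import Defs.
From HB Require Import structures.
From mathcomp Require Import all_boot all_order all_algebra.
From mathcomp Require Import reals.
From mathcomp Require Import fingroup perm.
Set Implicit Arguments. Unset Strict Implicit. Unset Printing Implicit Defensive.
Import Order.TTheory GRing.Theory Num.Theory.
Local Open Scope group_scope.

Section Perm.
Variable N : nat.
Implicit Types (s f g : 'S_N) (x y z i w : 'I_N).

Lemma fc_s s x i : fconnect s x (s i) = fconnect s x i.
Proof. by rewrite -same_fconnect1_r //; exact: perm_inj. Qed.

Lemma fc_sV s x i : fconnect s x (s^-1 i) = fconnect s x i.
Proof. by rewrite -(fc_s s x (s^-1 i)) permKV. Qed.

Lemma fcon_sub f g : (forall w, g w = f w \/ g w = f^-1 w) ->
  forall y z, fconnect g y z -> fconnect f y z.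
Proof.
move=> H; apply: connect_sub => w w' /= /eqP <-.
case: (H w) => ->; first exact: fconnect1.
rewrite fconnect_sym; last exact: perm_inj.
by have := fconnect1 f (f^-1 w); rewrite permKV.
Qed.

Definition revf s x : 'I_N -> 'I_N := fun i => if fconnect s x i then s^-1 i else s i.

Lemma revf_inj s x : injective (revf s x).
Proof.
move=> i j; rewrite /revf.
case Hi: (fconnect s x i); case Hj: (fconnect s x j).
- by move/(congr1 s); rewrite !permKV.
- by move=> E; move: Hj; rewrite -(fc_s s x j) -E fc_sV Hi.
- by move=> E; move: Hi; rewrite -(fc_s s x i) E fc_sV Hj.
- exact: perm_inj.
Qed.

Definition rev s x : 'S_N := perm (@revf_inj s x).

Lemma revE s x i : rev s x i = if fconnect s x i then s^-1 i else s i.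
Proof. by rewrite permE. Qed.

Definition resf s x : 'I_N -> 'I_N := fun i => if fconnect s x i then s i else i.

Lemma resf_inj s x : injective (resf s x).
Proof.
move=> i j; rewrite /resf.
case Hi: (fconnect s x i); case Hj: (fconnect s x j).
- exact: perm_inj.
- by move=> E; move: Hj; rewrite -E fc_s Hi.
- by move=> E; move: Hi; rewrite E fc_s Hj.
- by [].
Qed.

Lemma odd_rev s x : odd_perm (rev s x) = odd_perm s.
Proof.
pose r : 'S_N := perm (@resf_inj s x).
have rV i : r^-1 i = if fconnect s x i then s^-1 i else i.
  apply: (@perm_inj _ r); rewrite permKV permE /resf.
  by case Hi: (fconnect s x i); rewrite ?fc_sV Hi ?permKV.
have -> : rev s x = r^-1 * r^-1 * s.
  apply/permP => i; rewrite !permM revE !rV.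
  by case Hi: (fconnect s x i); rewrite ?fc_sV Hi ?permKV.
by rewrite !odd_permM odd_permV addbb.
Qed.

Lemma fcon_rev s x y z : fconnect (rev s x) y z = fconnect s y z.
Proof.
apply/idP/idP; apply: fcon_sub => w.
- by rewrite revE; case: ifP; [right|left].
- case Hw: (fconnect s x w); [right|left; by rewrite revE Hw].
  by apply: (@perm_inj _ (rev s x)); rewrite permKV revE fc_s Hw permK.
Qed.

Lemma order_rev s x y : fingraph.order (rev s x) y = fingraph.order s y.
Proof. by apply: eq_card => z; rewrite !inE /= fcon_rev. Qed.

Lemma rev_rev s x : rev (rev s x) x = s.
Proof.
apply/permP => i; rewrite revE fcon_rev.
case: ifP => Hi; last by rewrite revE Hi.
apply: (@perm_inj _ (rev s x)); rewrite permKV revE fc_s Hi permK //.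
Qed.

End Perm.
Local Open Scope ring_scope.
Section SkewDet.
Variables (R : numFieldType) (N : nat) (A : 'M[R]_N).
Hypothesis skewA : forall i j, A j i = - A i j.

Definition oc (s : 'S_N) := [set i | odd (fingraph.order s i)].
Definition inv_s (s : 'S_N) : 'S_N :=
  if [pick x in oc s] is Some x then rev s x else s.

Lemma oc_rev s x : oc (rev s x) = oc s.
Proof. by apply/setP => i; rewrite !inE order_rev. Qed.

Lemma oc_inv s : oc (inv_s s) = oc s.
Proof. by rewrite /inv_s; case: [pick x in oc s] => [x|] //; rewrite oc_rev. Qed.

Lemma inv_sK : involutive inv_s.
Proof.
move=> s; rewrite {2}/inv_s; case E: [pick x in oc s] => [x|].
  by rewrite /inv_s oc_rev E rev_rev.
by rewrite /inv_s E.
Qed.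

Definition Fs (s : 'S_N) := (-1) ^+ s * \prod_i A i (s i).

Lemma Fs_inv s : oc s != set0 -> Fs (inv_s s) = - Fs s.
Proof.
move=> Hs; rewrite /inv_s; case: pickP => [x|H]; last first.
  by case/set0Pn: Hs => i; rewrite H.
rewrite inE => Hx; rewrite /Fs odd_rev.
rewrite (bigID (fconnect s x)) [in RHS](bigID (fconnect s x)) /=.
have -> : \prod_(i | ~~ fconnect s x i) A i (rev s x i) =
          \prod_(i | ~~ fconnect s x i) A i (s i).
  by apply: eq_bigr => i /negbTE Hi; rewrite revE Hi.
have -> : \prod_(i | fconnect s x i) A i (rev s x i) =
          \prod_(i | fconnect s x i) - A i (s i).
  rewrite (reindex_inj (@perm_inj _ s)) /=.
  under eq_bigl do rewrite fc_s.
  apply: eq_bigr => i Hi; rewrite revE fc_s Hi permK skewA //.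
rewrite (prodrN (fconnect s x)).
rewrite -[(-1) ^+ #|_|]signr_odd (_ : odd #|fconnect s x| = true); last exact: Hx.
by rewrite expr1 mulN1r mulNr mulrN.
Qed.

Lemma det_good : \det A != 0 ->
  exists s : 'S_N, (oc s == set0) && (Fs s != 0).
Proof.
move=> HA.
have H2 : \sum_(s : 'S_N | ~~ (oc s == set0)) Fs s = 0.
  set S2 := (X in X = 0).
  have E : S2 = - S2.
    rewrite {1}/S2 (reindex_inj (can_inj inv_sK)) /=.
    under eq_bigl do rewrite oc_inv.
    by rewrite -sumrN; apply: eq_bigr => s Hs; rewrite Fs_inv.
  have : S2 *+ 2 == 0 by rewrite mulr2n {1}E addNr.
  by rewrite mulrn_eq0 /= => /eqP.
move: HA; rewrite /determinant (bigID (fun s : 'S_N => oc s == set0)) /=.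
rewrite [X in _ + X](_ : _ = 0) ?addr0; last exact: H2.
case: (pickP (fun s : 'S_N => (oc s == set0) && (Fs s != 0))) => [s Hs|Hn].
  by exists s.
rewrite big1 ?eqxx // => s Hs; move: (Hn s); rewrite Hs /= => /negbFE/eqP.
by [].
Qed.

Lemma skew_diag i : A i i = 0.
Proof.
have : A i i *+ 2 == 0 by rewrite mulr2n {1}skewA addNr.
by rewrite mulrn_eq0 /= => /eqP.
Qed.

Lemma skew_matching : \det A != 0 ->
  exists mu : 'I_N -> 'I_N, (forall i, mu (mu i) = i) /\ (forall i, A i (mu i) != 0).
Proof.
move=> /det_good [s /andP [/eqP Hoc HF]].
have Hnz i : A i (s i) != 0.
  apply: contraNneq HF => H0; rewrite /Fs; apply/eqP.
  rewrite (bigD1 i) //= H0 !mul0r mulr0 //.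
have Hev i : ~~ odd (fingraph.order s i).
  apply/negP => Ho; have : i \in oc s by rewrite inE.
  by rewrite Hoc inE.
have injs : injective s by exact: perm_inj.
have symf : connect_sym (rel_of_simpl (frel s)).
  by move=> a b; rewrite fconnect_sym.
have rootS i : froot s (s i) = froot s i.
  by symmetry; apply/(fingraph.rootP symf); exact: fconnect1.
have rootSV i : froot s ((s^-1)%g i) = froot s i.
  by rewrite -{2}(permKV s i) rootS.
have conR i : fconnect s (froot s i) i.
  by rewrite symf; exact: fingraph.connect_root.
have ordR i : fingraph.order s (froot s i) = fingraph.order s i.
  apply: eq_card => z; rewrite !inE /=.
  apply/idP/idP => H; apply: connect_trans H.
    by rewrite symf; apply: conR.
  by apply: conR.
pose mu i := if odd (findex s (froot s i) i) then (s^-1)%g i else s i.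
exists mu; split => i; last first.
  rewrite /mu; case: ifP => _ //.
  by rewrite -{1}(permKV s i) skewA oppr_eq0.
set b := froot s i; set k := findex s b i.
have Hi : iter k s b = i by apply: iter_findex; apply: conR.
have Hk : (k < fingraph.order s b)%N by apply: findex_max; apply: conR.
have Ho : ~~ odd (fingraph.order s b) by rewrite ordR.
rewrite {2}/mu -/b -/k.
case: ifP => Hodd.
- have k0 : (0 < k)%N by case: (k) Hodd.
  have E : (s^-1)%g i = iter k.-1 s b.
    by rewrite -Hi -(prednK k0) iterS permK.
  rewrite /mu rootSV -/b {1}E.
  rewrite findex_iter; last by rewrite (leq_ltn_trans (leq_pred _)).
  by rewrite -(prednK k0) /= in Hodd; rewrite (negbTE Hodd) permKV.
- have E : s i = iter k.+1 s b by rewrite -Hi.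
  rewrite /mu rootS -/b E findex_iter; last first.
    rewrite ltn_neqAle Hk andbT; apply/eqP => Ek.
    by move: Ho; rewrite -Ek /= Hodd.
  by rewrite /= Hodd /= permK.
Qed.
End SkewDet.

Local Open Scope nat_scope.
Section G.
Variables (n ne : nat) (ends : 'I_ne -> 'I_n.+1 * 'I_n.+1) (rho : 'I_n.+1) (C : {set 'I_ne}).
Hypothesis sg : simple_graph ends.
Variable hdf : 'I_ne -> 'I_n.+1.
Hypothesis H1 : forall c, c \in C -> (hdf c == (ends c).1) || (hdf c == (ends c).2).
Hypothesis H2 : forall c, c \in C -> hdf c != rho.
Hypothesis H3 : {in C &, injective hdf}.

Definition edge_of (c : 'I_ne) (u v : 'I_n.+1) := (ends c == (u, v)) || (ends c == (v, u)).

Definition src v := (v == rho) || [forall c in C, hdf c != v].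
Definition free v := (v != rho) && [forall c in C, hdf c != v].

Lemma adjE_sym (D : {set 'I_ne}) : symmetric (adjE ends D).
Proof.
by move=> u v; apply/existsP/existsP => -[c /andP [Hc He]]; exists c; rewrite Hc orbC.
Qed.

Lemma adjE_P (D : {set 'I_ne}) u v : reflect (exists2 c, c \in D & edge_of c u v) (adjE ends D u v).
Proof.
by apply: (iffP existsP) => -[c]; [case/andP => Hc He|move=> Hc He]; exists c => //; rewrite Hc.
Qed.

Lemma hd_edge c u v : c \in C -> edge_of c u v -> (hdf c == u) || (hdf c == v).
Proof.
move=> Hc; have := H1 Hc.
by case/orP => /eqP E /orP [] /eqP Ec; rewrite E Ec /= eqxx ?orbT.
Qed.

Lemma path_head p x : path (adjE ends C) x p -> uniq (x :: p) -> p != [::] ->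
  (forall c, c \in C -> edge_of c x (head x p) -> hdf c != x) -> ~~ src (last x p).
Proof.
elim: p x => [//|y p IH] x /= /andP [Hxy Hp] Hu _ Hx.
case/adjE_P: Hxy => c Hc Hcxy.
have Hcy : hdf c = y.
  by case/orP: (hd_edge Hc Hcxy) => /eqP // E; move: (Hx c Hc Hcxy); rewrite E eqxx.
case: p IH Hp Hu => [|z p] IH Hp Hu /=.
  rewrite /src negb_or -Hcy H2 //=.
  by apply/negP => /forallP /(_ c); rewrite Hc eqxx.
apply: (IH y) => //; first by move: Hu; rewrite cons_uniq => /andP [].
move=> c' Hc' Hyz; apply/eqP => Ey.
have Ecc : c' = c by apply: H3 => //; rewrite Ey Hcy.
move: Hcxy Hyz; rewrite Ecc /edge_of => /orP [] /eqP -> /orP [] /eqP E;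
  move: (congr1 fst E) (congr1 snd E) => /= E1 E2;
  subst; move: Hu; rewrite /= !inE ?eqxx ?orbT //.
Qed.

Lemma L1 u w : src u -> src w -> u != w -> ~~ connect (adjE ends C) u w.
Proof.
move=> Su Sw Huw; apply/negP => /connectP [p Hp Ew]; subst w.
move: Sw Huw; case: (shortenP Hp) => p' Hp' Hu _ Sw Huw.
move: Sw; apply/negP; apply: path_head => //.
  by case: p' {Hp' Hu} Huw => //=; rewrite eqxx.
move=> c Hc _; case/orP: Su => [/eqP -> | /forallP /(_ c)]; first exact: H2.
by rewrite Hc.
Qed.

Definition pc v := [pick c in C | hdf c == v].
Definition other c (v : 'I_n.+1) := if (ends c).1 == v then (ends c).2 else (ends c).1.

Lemma edge_t v c : c \in C -> hdf c = v -> edge_of c v (other c v).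
Proof.
move=> Hc Hv; rewrite /edge_of /other; case: ((ends c).1 =P v) => E.
  by rewrite -E -surjective_pairing eqxx.
have := H1 Hc; rewrite Hv; case/orP => /eqP Ev; first by rewrite Ev in E.
by rewrite Ev -surjective_pairing eqxx orbT.
Qed.

Lemma L2 (Hac : acyclic ends C) u : ~~ connect (adjE ends C) rho u ->
  exists2 v, connect (adjE ends C) u v & free v.
Proof.
move=> Hu.
case: (pickP (fun v => connect (adjE ends C) u v && free v)) => [v /andP [] | Hn].
  by exists v.
exfalso.
have symC (D : {set 'I_ne}) : connect_sym (adjE ends D) := sym_connect_sym (@adjE_sym D).
have Hin v : connect (adjE ends C) u v -> exists2 c, c \in C & hdf c == v.
  move=> Huv; have := Hn v; rewrite /= Huv /= /free => /negbT.
  rewrite negb_and negbK => /orP [/eqP Ev | ].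
    by move: Hu; rewrite symC -Ev Huv.
  by move/forallPn => [c]; rewrite negb_imply negbK => /andP [Hc He]; exists c.
pose t v := if pc v is Some c then other c v else v.
have pcP v : connect (adjE ends C) u v -> exists c, [/\ pc v = Some c, c \in C & hdf c = v].
  move=> Huv; rewrite /pc; case: pickP => [c /andP [Hc /eqP He] | Hn0].
    by exists c.
  by have [c Hc He] := Hin v Huv; move: (Hn0 c); rewrite Hc He.
have Hit k : connect (adjE ends C) u (iter k t u).
  elim: k => [|k IH] //=.
  have [c [Ec Hc Hv]] := pcP _ IH.
  apply: connect_trans IH (connect1 _); rewrite /t Ec.
  by apply/adjE_P; exists c => //; apply: edge_t.
pose g (k : 'I_n.+2) := iter k t u.
have : ~~ injectiveb g.
  by apply/injectiveP => /leq_card; rewrite !card_ord ltnn.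
case/injectivePn => i [j Hij Eg].
have [a [b [Hab Eab]]] : exists a b, (a < b)%N /\ iter a t u = iter b t u.
  case: (ltngtP i j) => H; [by exists i, j | by exists j, i |].
  by move/eqP: Hij; case; apply: val_inj.
set x0 := iter a t u.
have Hex : exists d, (0 < d)%N && (iter d t x0 == x0).
  exists (b - a); rewrite subn_gt0 Hab /= /x0 -iterD subnK ?Eab //.
  exact: ltnW.
case: (ex_minnP Hex) => d /andP [Hd0 /eqP Hd] Hmin.
have [c [Ec Hc Hv]] := pcP _ (Hit a).
have Hcl k : (0 < k <= d)%N -> connect (adjE ends (C :\ c)) (t x0) (iter k t x0).
  elim: k => [//|k IH] /andP [_ Hk].
  case: k IH Hk => [|k] IH Hk //.
  have Hy : iter k.+1 t x0 != x0.
    apply/eqP => E; have := Hmin k.+1; rewrite E eqxx /= => /(_ isT).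
    by rewrite leqNgt Hk.
  have IH' := IH (ltnW Hk).
  have Hux : connect (adjE ends C) u (iter k.+1 t x0) by rewrite /x0 -iterD Hit.
  have [cy [Ecy Hcy Hvy]] := pcP _ Hux.
  apply: connect_trans IH' (connect1 _).
  rewrite [iter k.+2 t x0]iterS {2}/t Ecy.
  apply/adjE_P; exists cy; last exact: edge_t.
  rewrite in_setD1 Hcy andbT; apply/eqP => E.
  by move: Hy; rewrite -Hvy E Hv eqxx.
have Hf := Hcl d; rewrite Hd Hd0 leqnn /= in Hf; have {}Hf := Hf isT.
have := Hac c Hc; have := edge_t Hc Hv.
rewrite /t Ec in Hf.
case/orP => /eqP ->; rewrite /= ?Hf //.
by rewrite symC Hf.
Qed.

Variable dm : rel 'I_n.+1.
Hypothesis D1 : forall u w, dm u w -> free u.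
Hypothesis D2 : forall u w, dm u w -> dm w u.
Hypothesis D3 : forall u w w', dm u w -> dm u w' -> w = w'.
Hypothesis D4 : forall u, free u -> exists w, dm u w.
Hypothesis D5 : forall u w, dm u w -> adj ends u w.

Lemma free_src v : free v -> src v.
Proof. by rewrite /free /src => /andP [_ ->]; rewrite orbT. Qed.

Lemma L3 (Hac : acyclic ends C) (Hpar : odd #|C| = odd n) : dimer_rooted_forest ends rho C.
Proof.
have symC : connect_sym (adjE ends C) := sym_connect_sym (@adjE_sym C).
have Hlt e : ((ends e).1 < (ends e).2)%N by case: sg.
have Hsp e : ends e = ((ends e).1, (ends e).2) by case: (ends e).
split => //; split; first by rewrite subn1.
pose D := [set e | dm (ends e).1 (ends e).2].
have cov_free v : covered ends D v -> free v.
  case/existsP => d /andP []; rewrite inE => Hd /orP [] /eqP ->; first exact: D1 Hd.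
  exact: D1 (D2 Hd).
have free_cov v : free v -> covered ends D v.
  move=> Hv; have [w Hw] := D4 Hv; case/adjE_P: (D5 Hw) => e _ /orP [] /eqP He.
    by apply/existsP; exists e; rewrite inE He /= Hw eqxx.
  by apply/existsP; exists e; rewrite inE He /= (D2 Hw) eqxx orbT.
exists D; split; [|split; [|split]].
- apply/pred0P => e /=; apply/negbTE/negP => /andP [Hc]; rewrite inE => He.
  have Hne : (ends e).1 != (ends e).2 by rewrite neq_ltn Hlt.
  have := L1 (free_src (D1 He)) (free_src (D1 (D2 He))) Hne.
  rewrite connect1 //; apply/adjE_P; exists e => //.
  by rewrite /edge_of -Hsp eqxx.
- move=> d1 d2; rewrite !inE => H1d H2d Hne.
  apply/pred0P => v /=; rewrite !inE; apply/negbTE/negP.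
  case/andP => /orP [] /eqP E1 /orP [] /eqP E2; apply/negP: Hne; apply/negPn/eqP. 
  + apply: (proj2 sg); rewrite (Hsp d1) (Hsp d2) -E1 -E2; congr pair.
    by apply: D3 H1d _; rewrite -E1 E2.
  + have E : (ends d1).2 = (ends d2).1.
      by apply: D3 H1d _; rewrite -E1 E2; apply: D2.
    move: (Hlt d1) (Hlt d2); rewrite E -E1 -E2 => h1 h2.
    by have := ltn_trans h1 h2; rewrite ltnn.
  + have E : (ends d1).1 = (ends d2).2.
      by apply: D3 (D2 H1d) _; rewrite -E1 E2.
    move: (Hlt d1) (Hlt d2); rewrite E -E1 -E2 => h1 h2.
    by have := ltn_trans h1 h2; rewrite ltnn.
  + apply: (proj2 sg); rewrite (Hsp d1) (Hsp d2) -E1 -E2; congr pair.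
    by apply: D3 (D2 H1d) _; rewrite -E1 E2; apply: D2.
- move=> v Hv; apply/negP => /cov_free Hf.
  have Hrv : rho != v by rewrite eq_sym; case/andP: Hf.
  have Sr : src rho by rewrite /src eqxx.
  by have := L1 Sr (free_src Hf) Hrv; rewrite Hv.
- move=> u Hu; have [v0 Huv0 Hf0] := L2 Hac Hu.
  rewrite -(cards1 v0); apply: eq_card => v; rewrite !inE.
  apply/andP/eqP => [[Huv /cov_free Hf] | ->]; last by rewrite Huv0 free_cov.
  apply/eqP; case: eqVneq => // Hne.
  have := L1 (free_src Hf0) (free_src Hf); rewrite eq_sym Hne => /(_ isT).
  by rewrite (connect_trans _ Huv) // symC.
Qed.
End G.
Local Open Scope ring_scope.

Section Main.
Variables (R : realType) (n ne : nat) (ends : 'I_ne -> 'I_n.+1 * 'I_n.+1) (rho : 'I_n.+1) (C : {set 'I_ne}).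
Hypothesis sg : simple_graph ends.
Let B := B_C_hat R ends C rho.
Let S := skew_part (L_hat R ends rho).
Let M := block_mx (0 : 'M[R]_#|C|) B (- B^T) S.

Lemma incE e v : incidence ends R e v =
  if v == (ends e).1 then 1 else if v == (ends e).2 then -1 else 0.
Proof. by rewrite mxE. Qed.

Lemma MEul a b : M (lshift n a) (lshift n b) = 0.
Proof. by rewrite /M block_mxEul mxE. Qed.
Lemma MEur a j : M (lshift n a) (rshift #|C| j) = incidence ends R (enum_val a) (lift rho j).
Proof. by rewrite /M block_mxEur /B mxE. Qed.
Lemma MEdl j a : M (rshift #|C| j) (lshift n a) = - incidence ends R (enum_val a) (lift rho j).
Proof. by rewrite /M block_mxEdl !mxE. Qed.
Lemma MEdr j k : M (rshift #|C| j) (rshift #|C| k) = S j k.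
Proof. by rewrite /M block_mxEdr. Qed.

Lemma SE j k : S j k = (if (j <= k)%N then L_hat R ends rho j k else 0)
                     - (if (k <= j)%N then L_hat R ends rho k j else 0).
Proof. by rewrite /S /skew_part !mxE. Qed.

Lemma skewM i j : M j i = - M i j.
Proof.
case: (split_ordP i) => a ->; case: (split_ordP j) => b ->.
- by rewrite !MEul oppr0.
- by rewrite MEur MEdl.
- by rewrite MEur MEdl opprK.
- by rewrite !MEdr !SE opprB.
Qed.

Lemma parity : \det M != 0 -> odd #|C| = odd n.
Proof.
move=> Hd.
have HT : M^T = - M by apply/matrixP => i j; rewrite mxE [(- M) i j]mxE skewM.
have : \det M = (-1) ^+ (#|C| + n) * \det M.
  by rewrite -[in LHS]det_tr HT -scaleN1r detZ.
rewrite -signr_odd; case Ho: (odd (#|C| + n)); last first.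
  by move: Ho; rewrite oddD; case: (odd #|C|); case: (odd n).
rewrite expr1 mulN1r => E.
have : \det M *+ 2 == 0 by rewrite mulr2n {1}E addNr.
by rewrite mulrn_eq0 /= (negbTE Hd).
Qed.

Lemma connect_inv (T : finType) (e : rel T) (U : Type) (p : T -> U) :
  (forall u v, e u v -> p u = p v) -> forall x y, connect e x y -> p x = p y.
Proof.
move=> H x y /connectP [s]; elim: s x => [|z s IH] x /=; first by move=> _ ->.
by case/andP => /H -> /IH.
Qed.

Lemma potential : \det M != 0 -> forall f : 'cV[R]_#|C|, exists p : 'I_n.+1 -> R,
  p rho = 0 /\ forall a, p (ends (enum_val a)).1 - p (ends (enum_val a)).2 = f a 0.
Proof.
move=> Hd f.
have HU : M \in unitmx by rewrite unitmxE unitfE.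
set z := invmx M *m col_mx f 0.
have Hz : M *m z = col_mx f 0 by rewrite /z mulmxA mulmxV // mul1mx.
rewrite -[z]vsubmxK /M mul_block_col in Hz.
case/eq_col_mx: Hz => Htop _; rewrite mul0mx add0r in Htop.
pose p v := if unlift rho v is Some j then dsubmx z j 0 else 0.
exists p; split; first by rewrite /p unlift_none.
move=> a; rewrite -Htop mxE.
set c := enum_val a.
have -> : \sum_j B a j * dsubmx z j 0 = \sum_v incidence ends R c v * p v.
  rewrite [RHS](bigD1_ord rho) //= /p unlift_none mulr0 add0r.
  by apply: eq_bigr => j _; rewrite liftK /B mxE.
have Hne : (ends c).1 != (ends c).2 by rewrite neq_ltn (proj1 sg).
rewrite (bigD1 (ends c).1) //= (bigD1 (ends c).2) /=; last by rewrite eq_sym Hne.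
rewrite big1 ?addr0; last first.
  by move=> v /andP [H1 H2]; rewrite incE (negbTE H1) (negbTE H2) mul0r.
by rewrite !incE eqxx eq_sym (negbTE Hne) eqxx mul1r mulN1r.
Qed.

Lemma acyc : \det M != 0 -> acyclic ends C.
Proof.
move=> Hd e He; apply/negP => Hcon.
set a0 := enum_rank_in He e.
have [p [Hp0 Hp]] := potential Hd (\col_a (if a == a0 then 1 else 0)).
have Hval c : c \in C -> p (ends c).1 - p (ends c).2 = if c == e then 1 else 0.
  move=> Hc; have := Hp (enum_rank_in He c); rewrite enum_rankK_in // mxE => ->.
  congr (if _ then _ else _); apply/eqP/eqP => [E|->//].
  by rewrite -(enum_rankK_in He Hc) E /a0 enum_rankK_in.
have Heq u v : adjE ends (C :\ e) u v -> p u = p v.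
  case/adjE_P => c; rewrite in_setD1 => /andP [Hce Hc] He'.
  have := Hval c Hc; rewrite (negbTE Hce) => /eqP; rewrite subr_eq0 => /eqP E.
  by case/orP: He' => /eqP Ec; rewrite Ec /= in E; rewrite E.
have := connect_inv Heq Hcon; have := Hval e He; rewrite eqxx => E1 E2.
by move: E1; rewrite E2 subrr => /eqP; rewrite eq_sym oner_eq0.
Qed.

Lemma Ladj x y : L_hat R ends rho x y != 0 -> x != y -> adj ends (lift rho x) (lift rho y).
Proof.
move=> HL Hxy; set u := lift rho x; set w := lift rho y.
have Huw : u != w by apply: contraNneq Hxy => /lift_inj ->.
case: (pickP (fun e => incidence ends R e u * incidence ends R e w != 0)) => [e He | Hn];
  last first.
  move: HL; rewrite mxE /= mxE big1 ?eqxx // => e _; rewrite mxE.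
  by move: (Hn e) => /negbFE/eqP.
apply/adjE_P; exists e; first by rewrite inE.
move: He; rewrite mulf_eq0 negb_or => /andP [Hu Hw].
have memE v : incidence ends R e v != 0 -> (v == (ends e).1) || (v == (ends e).2).
  by rewrite incE; case: ifP => // _; case: ifP => //; rewrite eqxx.
have Hsp : ends e = ((ends e).1, (ends e).2) by case: (ends e).
move/memE: Hu => /orP [] /eqP Eu; move/memE: Hw => /orP [] /eqP Ew;
  first [by move: Huw; rewrite Eu Ew eqxx | by rewrite /edge_of Hsp -Eu -Ew eqxx ?orbT].
Qed.

Lemma forest : \det M != 0 -> dimer_rooted_forest ends rho C.
Proof.
move=> Hd.
have [mu [Hmu Hnz]] := skew_matching skewM Hd.
have muinj : injective mu := can_inj Hmu.
have lr a k : lshift n a != rshift #|C| k.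
  by apply/eqP => /(congr1 val) /= E; have := ltn_ord a; rewrite E ltnNge leq_addr.
have Hmul a : exists j, mu (lshift n a) = rshift #|C| j.
  case: (split_ordP (mu (lshift n a))) => [b E | j E]; last by exists j.
  by have := Hnz (lshift n a); rewrite E MEul eqxx.
pose nd (x : 'I_(#|C| + n)) := match split x with inl _ => rho | inr j => lift rho j end.
have ndR j : nd (rshift #|C| j) = lift rho j.
  by rewrite /nd -[rshift _ j]/(unsplit (inr _ j)) unsplitK.
pose hdf c := if [pick a : 'I_#|C| | enum_val a == c] is Some a then nd (mu (lshift n a)) else rho.
have hdfE a : hdf (enum_val a) = nd (mu (lshift n a)).
  rewrite /hdf; case: pickP => [a' /eqP /enum_val_inj -> //|Hn].
  by move: (Hn a); rewrite eqxx.
have Hall c : c \in C -> exists a : 'I_#|C|, c = enum_val a.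
  by move=> Hc; exists (enum_rank_in Hc c); rewrite enum_rankK_in.
pose dm u w := [exists j, exists k, (lift rho j == u) && (lift rho k == w) &&
                  (mu (rshift #|C| j) == rshift #|C| k)].
apply: (@L3 n ne ends rho C sg hdf _ _ _ dm); last first.
- by rewrite parity.
- exact: acyc.
- move=> u w /existsP [j /existsP [k /andP [/andP [/eqP <- /eqP <-] /eqP Hjk]]].
  have := Hnz (rshift #|C| j); rewrite Hjk MEdr SE.
  have [->|Hjk'] := eqVneq j k; first by rewrite subrr eqxx.
  case H1: (L_hat R ends rho j k == 0); case H2: (L_hat R ends rho k j == 0).
  + by rewrite (eqP H1) (eqP H2) !if_same subrr eqxx.
  + move=> _; rewrite /adj (adjE_sym ends setT); apply: Ladj; first by rewrite H2.
    by rewrite eq_sym.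
  + by move=> _; apply: Ladj => //; rewrite H1.
  + by move=> _; apply: Ladj => //; rewrite H1.
- move=> u; case/andP => Hu Hf; case: (unliftP rho u) Hu Hf => [j ->|->]; last by rewrite eqxx.
  move=> _ Hf; case: (split_ordP (mu (rshift #|C| j))) => [a E | k E].
    have Ea : mu (lshift n a) = rshift #|C| j by rewrite -E Hmu.
    move/forallP: Hf => /(_ (enum_val a)); rewrite enum_valP /= hdfE Ea ndR eqxx.
    by [].
  by exists (lift rho k); apply/existsP; exists j; apply/existsP; exists k; rewrite E !eqxx.
- move=> u w w' /existsP [j /existsP [k /andP [/andP [/eqP <- /eqP <-] /eqP Hjk]]].
  move=> /existsP [j' /existsP [k' /andP [/andP [/eqP /lift_inj Ej /eqP <-] /eqP Hjk']]].
  by move: Hjk'; rewrite Ej Hjk => /rshift_inj ->.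
- move=> u w /existsP [j /existsP [k /andP [/andP [Hu Hw] /eqP Hjk]]].
  apply/existsP; exists k; apply/existsP; exists j; rewrite Hu Hw /=.
  by rewrite -Hjk Hmu.
- move=> u w /existsP [j /existsP [k /andP [/andP [/eqP <- _] /eqP Hjk]]].
  rewrite /free eq_sym neq_lift /=; apply/forallP => c; apply/implyP => Hc.
  have [a ->] := Hall c Hc; rewrite hdfE; have [j' E] := Hmul a; rewrite E ndR.
  apply/negP => /eqP /lift_inj Ej; subst j'.
  by move: (lr a k); rewrite -Hjk -E Hmu eqxx.
- move=> c c' Hc Hc'; have [a ->] := Hall c Hc; have [a' ->] := Hall c' Hc'.
  rewrite !hdfE; have [j E] := Hmul a; have [j' E'] := Hmul a'.
  rewrite E E' !ndR => /lift_inj Ej; subst j'.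
  by rewrite -E' in E; move/muinj/lshift_inj: E => ->.
  move=> c Hc; have [a ->] := Hall c Hc; rewrite hdfE; have [j E] := Hmul a.
  by rewrite E ndR eq_sym neq_lift.
- move=> c Hc; have [a ->] := Hall c Hc; rewrite hdfE; have [j E] := Hmul a.
  rewrite E ndR; have := Hnz (lshift n a); rewrite E MEur incE.
  by case: ifP => // _; case: ifP => _; rewrite ?orbT ?eqxx.
Qed.
End Main.

Unset Implicit Arguments.
Theorem mainTheorem10 (R : realType) (n ne : nat)
  (ends : 'I_ne -> 'I_n.+1 * 'I_n.+1) (rho : 'I_n.+1) (C : {set 'I_ne}) :
  simple_graph ends -> connected_graph ends ->
  (\prod_(i < n.+1 | i != rho) ((deg ends i)%:R : R))^-1 *
    \det (block_mx (0 : 'M[R]_#|C|) (B_C_hat R ends C rho)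
                   (- trmx (B_C_hat R ends C rho)) (skew_part (L_hat R ends rho))) != 0 ->
  dimer_rooted_forest ends rho C.
Proof.
move=> sg _ H; apply: (@forest R n ne ends rho C sg).
by apply/eqP => E; move: H; rewrite E mulr0 eqxx.
Qed.
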